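(* Let $R$ be a ring with identity, $(S,\leq)$ a strictly ordered monoid which is quasitotally ordered, and $\omega:S\to\mathrm{End}(R)$ a monoid homomorphism. Assume $R$ is $S$-compatible and $(S,\omega)$-Armendariz, and let $A=R[[S,\omega]]$. (1) If $R$ is a generalized right Baer ring, then $A$ is a generalized right Baer ring. (2) If $R$ is a generalized right quasi-Baer ring, then $A$ is a generalized right quasi-Baer ring.
   Context: All rings are associative with identity. For a nonempty subset $X$ of a ring $R$, $r_R(X)=\{a\in R : xa=0 \text{ for all } x\in X\}$ is its right annihilator, and for a positive integer $n$, $X^n$ denotes the set of all products $a_1a_2\cdots a_n$ with $a_i\in X$ for $1\le i\le n$. A ring $R$ is generalized right Baer if for every nonempty subset $X$ of $R$ there exist a positive integer $n$ (depending on $X$) and an idempotent $e\in R$ with $r_R(X^n)=eR$. A ring $R$ is generalized right quasi-Baer if for every right ideal $I$ of $R$ there exist a positive integer $n$ (depending on $I$) and an idempotent $e\in R$ with $r_R(I^n)=eR$. An ordered monoid $(S,\leq)$ is a monoid with a partial order such that $u\le v$ implies $ut\le vt$ and $tu\le tv$ for all $t\in S$; it is strictly ordered if $u<v$ implies $ut<vt$ and $tu<tv$ for all $t\in S$. It is quasitotally ordered if $\leq$ can be refined to an order $\preceq$ with respect to which $S$ is a strictly totally ordered monoid. A subset of $S$ is artinian if every strictly decreasing sequence in it is finite, and narrow if every subset of pairwise incomparable elements is finite. Given a ring $R$, a strictly ordered monoid $(S,\le)$ and a monoid homomorphism $\omega:S\to\mathrm{End}(R)$, $s\mapsto\omega_s$,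 the ring of skew generalized power series $R[[S,\omega]]$ is the set of all maps $f:S\to R$ whose support $\mathrm{supp}(f)=\{s\in S: f(s)\neq 0\}$ is artinian and narrow, with pointwise addition and multiplication $(fg)(s)=\sum_{(u,v)\in X_s(f,g)} f(u)\,\omega_u(g(v))$, where $X_s(f,g)=\{(u,v)\in S\times S: uv=s,\ f(u)\ne0,\ g(v)\ne0\}$ (a finite set; an empty sum is $0$). An endomorphism $\sigma$ of $R$ is compatible if for all $a,b\in R$: $ab=0 \iff a\sigma(b)=0$. $R$ is $S$-compatible if $\omega_s$ is compatible for every $s\in S$. $R$ is $(S,\omega)$-Armendariz if whenever $f,g\in R[[S,\omega]]$ satisfy $fg=0$, then $f(s)\,\omega_s(g(t))=0$ for all $s,t\in S$. *)

(* Defs.v *)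
From HB Require Import structures.
From mathcomp Require Import all_boot all_order all_algebra.
From mathcomp Require Import boolp classical_sets functions cardinality fsbigop.
Set Implicit Arguments. Unset Strict Implicit. Unset Printing Implicit Defensive.
Import Order.TTheory GRing.Theory.
Local Open Scope classical_set_scope.
Local Open Scope ring_scope.

(* Generic "ring" notions relative to a carrier set C : set T with           *)
(* operations add, opp, mul and zero (used both for R, with C = setT, and    *)
(* for A = R[[S,omega]], with C = the set of admissible series).             *)
Section GenericRing.
Variables (T : Type) (C : set T) (zero : T)
          (add : T -> T -> T) (opp : T -> T) (mul : T -> T -> T).

Definition rann (X : set T) : set T :=
  [set a | C a /\ forall x, X x -> mul x a = zero].

(* X^n (n >= 1) : all products a_1 a_2 ... a_n with a_i in X *)
Definition setpow (X : set T) (n : nat) : set T :=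
  [set y | exists (a : T) (s : seq T),
      [/\ X a, (forall i, (i < size s)%N -> X (nth a s i)), (size s).+1 = n &
          y = foldl mul a s]].

Definition idempotent (e : T) : Prop := mul e e = e.

Definition lprinc (e : T) : set T := [set mul e a | a in C].

Definition right_ideal (I : set T) : Prop :=
  [/\ I `<=` C, I zero,
      (forall x y, I x -> I y -> I (add x y)),
      (forall x, I x -> I (opp x)) &
      (forall x r, I x -> C r -> I (mul x r))].

Definition gen_right_Baer : Prop :=
  forall X : set T, X `<=` C -> X !=set0 ->
    exists (n : nat) (e : T), [/\ (0 < n)%N, C e, idempotent e &
      rann (setpow X n) = lprinc e].

Definition gen_right_quasi_Baer : Prop :=
  forall I : set T, right_ideal I ->
    exists (n : nat) (e : T), [/\ (0 < n)%N, C e, idempotent e &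
      rann (setpow I n) = lprinc e].
End GenericRing.

Definition ring_gen_right_Baer (R : pzRingType) : Prop :=
  gen_right_Baer [set: R] 0 (@GRing.mul R).
Definition ring_gen_right_quasi_Baer (R : pzRingType) : Prop :=
  gen_right_quasi_Baer [set: R] 0 (@GRing.add R) (@GRing.opp R) (@GRing.mul R).

Section OrderedMonoid.
Variables (S : Type) (op : S -> S -> S) (one : S).

Definition is_monoid : Prop :=
  [/\ (forall x y z, op x (op y z) = op (op x y) z),
      (forall x, op one x = x) & (forall x, op x one = x)].

Definition is_partial_order (le : S -> S -> Prop) : Prop :=
  [/\ (forall x, le x x),
      (forall x y, le x y -> le y x -> x = y) &
      (forall x y z, le x y -> le y z -> le x z)].

Definition lt_of (le : S -> S -> Prop) (u v : S) : Prop := le u v /\ u <> v.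

Definition ordered_monoid (le : S -> S -> Prop) : Prop :=
  [/\ is_monoid, is_partial_order le &
      forall u v t, le u v -> le (op u t) (op v t) /\ le (op t u) (op t v)].

Definition strictly_ordered_monoid (le : S -> S -> Prop) : Prop :=
  ordered_monoid le /\
  forall u v t, lt_of le u v ->
    lt_of le (op u t) (op v t) /\ lt_of le (op t u) (op t v).

Definition total_rel (le : S -> S -> Prop) : Prop :=
  forall x y, le x y \/ le y x.

Definition quasitotally_ordered (le : S -> S -> Prop) : Prop :=
  exists le' : S -> S -> Prop,
    [/\ (forall u v, le u v -> le' u v), strictly_ordered_monoid le' &
        total_rel le'].

Definition artinian (le : S -> S -> Prop) (X : set S) : Prop :=
  ~ exists a : nat -> S, forall n, X (a n) /\ lt_of le (a n.+1) (a n).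

Definition narrow (le : S -> S -> Prop) (X : set S) : Prop :=
  forall Y : set S, Y `<=` X ->
    (forall u v, Y u -> Y v -> u <> v -> ~ le u v /\ ~ le v u) ->
    finite_set Y.
End OrderedMonoid.

Section SkewSeries.
Variables (R : pzRingType) (S : choiceType) (op : S -> S -> S) (one : S)
          (le : S -> S -> Prop) (omega : S -> {rmorphism R -> R}).

Definition monoid_hom_End : Prop :=
  (forall a, omega one a = a) /\
  (forall s t a, omega (op s t) a = omega s (omega t a)).

Definition supp (f : S -> R) : set S := [set s | f s <> 0].

Definition skew_series : set (S -> R) :=
  [set f | artinian le (supp f) /\ narrow le (supp f)].

Definition Xs (f g : S -> R) (s : S) : set (S * S) :=
  [set p | op p.1 p.2 = s /\ f p.1 <> 0 /\ g p.2 <> 0].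

Definition ss_zero : S -> R := fun _ => 0.
Definition ss_add (f g : S -> R) : S -> R := fun s => f s + g s.
Definition ss_opp (f : S -> R) : S -> R := fun s => - f s.
Definition ss_mul (f g : S -> R) : S -> R :=
  fun s => \sum_(p \in Xs f g s) (f p.1 * omega p.1 (g p.2)).

Definition compatible (sigma : R -> R) : Prop :=
  forall a b : R, a * b = 0 <-> a * sigma b = 0.
Definition S_compatible : Prop := forall s, compatible (omega s).

Definition S_omega_Armendariz : Prop :=
  forall f g, skew_series f -> skew_series g -> ss_mul f g = ss_zero ->
    forall s t, f s * omega s (g t) = 0.

Definition series_gen_right_Baer : Prop :=
  gen_right_Baer skew_series ss_zero ss_mul.
Definition series_gen_right_quasi_Baer : Prop :=
  gen_right_quasi_Baer skew_series ss_zero ss_add ss_opp ss_mul.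
End SkewSeries.

(* Main.v *)
Require Import Defs.
From mathcomp Require Import all_boot all_order all_algebra.
From mathcomp Require Import boolp classical_sets functions cardinality fsbigop.
Set Implicit Arguments. Unset Strict Implicit. Unset Printing Implicit Defensive.
Import Order.TTheory GRing.Theory.
Local Open Scope classical_set_scope.

Lemma inj_not_finite (T : Type) (Y : set T) (f : nat -> T) :
  (forall n, Y (f n)) -> injective f -> ~ finite_set Y.
Proof.
move=> Yf injf finY; apply: infinite_nat.
have : finite_set (f @` [set: nat]).
  by apply: sub_finite_set finY => _ [n _ <-].
rewrite (eq_finite_set (inj_card_eq _)) //.
by move=> x y _ _; apply: injf.
Qed.

Lemma inf_seq (T : choiceType) (Y : set T) : ~ finite_set Y ->
  exists f : nat -> T, (forall n, Y (f n)) /\ injective f.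
Proof.
move=> infY.
have H : forall s : seq T, exists x, Y x /\ x \notin s.
  move=> s; apply: contrapT => hn; apply: infY.
  apply: sub_finite_set (finite_seq s) => x Yx /=.
  apply: contrapT => xs; apply: hn; exists x; split => //; exact/negP.
have [c hc] := choice H.
pose g := fix g n := if n is m.+1 then c (g m) :: g m else [::].
exists (fun n => c (g n)); split; first by move=> n; case: (hc (g n)).
have ing : forall k n, (k < n)%N -> c (g k) \in g n.
  move=> k; elim => // n IH; rewrite ltnS leq_eqVlt => /orP[/eqP->|kn].
    by rewrite /= inE eqxx.
  by rewrite /= inE (IH kn) orbT.
move=> m n eqmn; apply/eqP; rewrite eqn_leq; apply/andP; split;
  rewrite leqNgt; apply/negP => lt.
- have := ing _ _ lt; rewrite -eqmn; case: (hc (g m)) => _ /negP; tauto.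
- have := ing _ _ lt; rewrite eqmn; case: (hc (g n)) => _ /negP; tauto.
Qed.

Definition good (T : Type) (le : T -> T -> Prop) (X : set T) :=
  forall a : nat -> T, (forall n, X (a n)) ->
    exists i j, (i < j)%N /\ le (a i) (a j).

Section Ord.
Variables (T : Type) (le : T -> T -> Prop).
Hypothesis hpo : is_partial_order le.

Lemma le_refl x : le x x. Proof. by case: hpo. Qed.
Lemma le_anti x y : le x y -> le y x -> x = y. Proof. by case: hpo => _ h _; apply: h. Qed.
Lemma le_trans x y z : le x y -> le y z -> le x z. Proof. by case: hpo => _ _ h; apply: h. Qed.


Lemma an_good X : artinian le X -> narrow le X -> good le X.
Proof.
move=> hart hnar a Xa; apply: contrapT => bad.
have bad' : forall i j, (i < j)%N -> ~ le (a i) (a j).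
  by move=> i j ij lij; apply: bad; exists i, j.
pose mini i := forall j, (i < j)%N -> ~ lt_of le (a j) (a i).
have [Hinf|Hfin] := pselect (forall N, exists i, (N <= i)%N /\ mini i).
- have [psi hpsi] := choice Hinf.
  pose idx := fix idx n := if n is m.+1 then psi (idx m).+1 else psi 0.
  have idxS n : (idx n < idx n.+1)%N by case: (hpsi (idx n).+1).
  have idxlt : {homo idx : i j / (i < j)%N >-> (i < j)%N}.
    by apply: (@homo_ltn _ idx (fun i j => (i < j)%N)) => // y x z; apply: ltn_trans.
  have idxmin n : mini (idx n) by case: n => [|n]; [case: (hpsi 0) | case: (hpsi (idx n).+1)].
  apply: (@inj_not_finite _ (a @` (idx @` setT)) (fun n => a (idx n))).
  + by move=> n; exists (idx n) => //; exists n.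
  + move=> m n eq; apply/eqP; apply: contrapT => /negP mn.
    have [lt|lt] : (m < n)%N \/ (n < m)%N.
      by have [l|l|e] := ltngtP m n; [left|right|exfalso; subst; move: mn; rewrite eqxx].
    * by apply: (bad' _ _ (idxlt _ _ lt)); rewrite eq; apply: le_refl.
    * by apply: (bad' _ _ (idxlt _ _ lt)); rewrite eq; apply: le_refl.
  + apply: hnar; first by move=> _ [_ [n _ <-] <-].
    move=> _ _ [_ [m _ <-] <-] [_ [n _ <-] <-] neq.
    have [lt|lt] : (m < n)%N \/ (n < m)%N.
      by have [l|l|e] := ltngtP m n; [left|right|case: neq; rewrite e].
    * split; first exact: bad' (idxlt _ _ lt).
      by move=> lnm; apply: (idxmin m _ (idxlt _ _ lt)); split => // e; apply: neq.
    * split; last exact: bad' (idxlt _ _ lt).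
      by move=> lmn; apply: (idxmin n _ (idxlt _ _ lt)); split => // e; apply: neq.
- have [N HN] : exists N, forall i, (N <= i)%N -> exists j, (i < j)%N /\ lt_of le (a j) (a i).
    apply: contrapT => hn; apply: Hfin => N; apply: contrapT => hn2; apply: hn; exists N => i Ni.
    apply: contrapT => hn3; apply: hn2; exists i; split => // j ij ltji; apply: hn3.
    by exists j.
  have H' : forall i, exists j, (N <= i)%N -> (i < j)%N /\ lt_of le (a j) (a i).
    move=> i; have [Ni|Ni] := boolP (N <= i)%N.
      by have [j hj] := HN i Ni; exists j.
    by exists 0%N.
  have [chi hchi] := choice H'.
  pose b := fix b n := if n is m.+1 then chi (b m) else N.
  have bN n : (N <= b n)%N.
    elim: n => //= n IH; case: (hchi (b n) IH) => lt _; exact: leq_trans (ltnW lt).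
  apply: hart; exists (fun n => a (b n)) => n; split => //.
  by case: (hchi (b n) (bN n)).
Qed.

Lemma good_mono X : good le X -> forall a, (forall n, X (a n)) ->
  exists phi : nat -> nat, (forall n, (phi n < phi n.+1)%N) /\
    (forall i j, (i < j)%N -> le (a (phi i)) (a (phi j))).
Proof.
move=> hg a Xa.
pose term i := forall j, (i < j)%N -> ~ le (a i) (a j).
have [Hinf|Hfin] := pselect (forall N, exists i, (N <= i)%N /\ term i).
- have [psi hpsi] := choice Hinf.
  pose idx := fix idx n := if n is m.+1 then psi (idx m).+1 else psi 0.
  have idxS n : (idx n < idx n.+1)%N by case: (hpsi (idx n).+1).
  have idxlt : {homo idx : i j / (i < j)%N >-> (i < j)%N}.
    by apply: (@homo_ltn _ idx (fun i j => (i < j)%N)) => // y x z; apply: ltn_trans.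
  have idxt n : term (idx n) by case: n => [|n]; [case: (hpsi 0) | case: (hpsi (idx n).+1)].
  have [i [j [ij lij]]] := hg (fun n => a (idx n)) (fun n => Xa _).
  by case: (idxt i _ (idxlt _ _ ij)).
- have [N HN] : exists N, forall i, (N <= i)%N -> exists j, (i < j)%N /\ le (a i) (a j).
    apply: contrapT => hn; apply: Hfin => N; apply: contrapT => hn2; apply: hn; exists N => i Ni.
    apply: contrapT => hn3; apply: hn2; exists i; split => // j ij ltji; apply: hn3.
    by exists j.
  have H' : forall i, exists j, (N <= i)%N -> (i < j)%N /\ le (a i) (a j).
    move=> i; have [Ni|Ni] := boolP (N <= i)%N.
      by have [j hj] := HN i Ni; exists j.
    by exists 0%N.
  have [chi hchi] := choice H'.
  pose b := fix b n := if n is m.+1 then chi (b m) else N.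
  have bN n : (N <= b n)%N.
    elim: n => //= n IH; case: (hchi (b n) IH) => lt _; exact: leq_trans (ltnW lt).
  exists b; split; first by move=> n; case: (hchi (b n) (bN n)).
  apply: (@homo_ltn _ b (fun x y => le (a x) (a y))).
    by move=> y x z; apply: le_trans.
  by move=> n; case: (hchi (b n) (bN n)).
Qed.

Lemma good_artinian X : good le X -> artinian le X.
Proof.
move=> hg [a ha].
have ltt : forall x y z, lt_of le x y -> lt_of le y z -> lt_of le x z.
  move=> x y z [lxy nxy] [lyz nyz]; split; first exact: le_trans lxy lyz.
  by move=> e; subst; apply: nxy; apply: le_anti.
have dec : {homo a : i j / (i < j)%N >-> lt_of le j i}.
  apply: (@homo_ltn _ a (fun x y => lt_of le y x)).
    by move=> y x z h1 h2; apply: ltt h2 h1.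
  by move=> n; case: (ha n).
have [i [j [ij lij]]] := hg a (fun n => (ha n).1).
by case: (dec _ _ ij) => l1 n1; apply: n1; apply: le_anti.
Qed.

Lemma good_sub X Y : good le X -> Y `<=` X -> good le Y.
Proof. by move=> hg YX a Ya; apply: hg => n; apply: YX. Qed.

End Ord.

Lemma good_narrow (T : choiceType) (le : T -> T -> Prop) X : good le X -> narrow le X.
Proof.
move=> hg Y YX hY; apply: contrapT => infY.
have [f [Yf injf]] := inf_seq infY.
have [i [j [ij lij]]] := hg f (fun n => YX _ (Yf n)).
have nij : f i <> f j by move=> e; move: (injf _ _ e) ij => ->; rewrite ltnn.
by case: (hY _ _ (Yf i) (Yf j) nij).
Qed.

Lemma artinian_sub (T : Type) (le : T -> T -> Prop) (X Y : set T) :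
  artinian le X -> Y `<=` X -> artinian le Y.
Proof. by move=> hA YX [a ha]; apply: hA; exists a => n; case: (ha n) => /YX. Qed.

Lemma narrow_sub (T : Type) (le : T -> T -> Prop) (X Y : set T) :
  narrow le X -> Y `<=` X -> narrow le Y.
Proof. by move=> hN YX Z ZY; apply: hN; apply: subset_trans ZY YX. Qed.

Section Mon.
Variables (S : choiceType) (op : S -> S -> S) (one : S) (le : S -> S -> Prop).
Hypothesis hS : strictly_ordered_monoid op one le.

Lemma hpo : is_partial_order le. Proof. by case: hS => -[]. Qed.
Lemma hmono u v t : le u v -> le (op u t) (op v t) /\ le (op t u) (op t v).
Proof. by case: hS => -[_ _ h] _; apply: h. Qed.
Lemma hstrict u v t : lt_of le u v -> lt_of le (op u t) (op v t) /\ lt_of le (op t u) (op t v).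
Proof. by case: hS => _ h; apply: h. Qed.

Definition Pset (U V : set S) : set S :=
  [set z | exists u v, [/\ U u, V v & z = op u v]].

Lemma good_mono2 (U V : set S) (a : nat -> S * S) : good le U -> good le V ->
  (forall n, U (a n).1 /\ V (a n).2) ->
  exists i j, (i < j)%N /\ le (a i).1 (a j).1 /\ le (a i).2 (a j).2.
Proof.
move=> gU gV ha.
have [p1 [p1S p1m]] := good_mono hpo gU (fun n => (ha n).1).
have [p2 [p2S p2m]] := good_mono hpo gV (fun n => (ha (p1 n)).2).
have p1lt : {homo p1 : i j / (i < j)%N >-> (i < j)%N}.
  by apply: (@homo_ltn _ p1 (fun i j => (i < j)%N)) => // y x z; apply: ltn_trans.
have p2lt : {homo p2 : i j / (i < j)%N >-> (i < j)%N}.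
  by apply: (@homo_ltn _ p2 (fun i j => (i < j)%N)) => // y x z; apply: ltn_trans.
exists (p1 (p2 0)), (p1 (p2 1)); split; first by apply: p1lt; apply: p2lt.
split; first by apply: p1m; apply: p2lt.
exact: p2m.
Qed.

Lemma good_prod U V : good le U -> good le V -> good le (Pset U V).
Proof.
move=> gU gV z hz.
have [w hw] := choice hz.
have [w2 hw2] := choice (fun n => hw n).
pose a n := (w n, w2 n).
have [i [j [ij [l1 l2]]]] := good_mono2 (a := a) gU gV (fun n => let: And3 h1 h2 _ := hw2 n in conj h1 h2).
exists i, j; split => //.
case: (hw2 i) => _ _ ->; case: (hw2 j) => _ _ ->.
apply: (le_trans hpo (hmono _ l1).1 (hmono _ l2).2).
Qed.

Lemma Xfin_gen U V s : good le U -> good le V ->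
  finite_set [set p : S * S | op p.1 p.2 = s /\ U p.1 /\ V p.2].
Proof.
move=> gU gV; apply: contrapT => inf.
have [f [hf injf]] := inf_seq inf.
have [i [j [ij [l1 l2]]]] := good_mono2 (a := f) gU gV (fun n => (hf n).2).
have nij : f i <> f j by move=> e; move: (injf _ _ e) ij => ->; rewrite ltnn.
case: (hf i) => ei _; case: (hf j) => ej _.
have [e1|n1] := pselect ((f i).1 = (f j).1).
- have n2 : (f i).2 <> (f j).2.
    by move=> e2; apply: nij; case: (f i) (f j) e1 e2 => ? ? [? ?] /= -> ->.
  have [_ [_ ne]] := hstrict (f i).1 (conj l2 n2).
  by apply: ne; rewrite ei e1 ej.
- have [[lt ne] _] := hstrict (f i).2 (conj l1 n1).
  have l3 := (hmono (f j).1 l2).2.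
  apply: ne; apply: (le_anti hpo lt); rewrite ei -ej; exact: l3.
Qed.
End Mon.

Section Series.
Local Open Scope ring_scope.
Variables (R : pzRingType) (S : choiceType) (op : S -> S -> S) (one : S)
          (le : S -> S -> Prop) (omega : S -> {rmorphism R -> R}).
Hypothesis hS : strictly_ordered_monoid op one le.
Hypothesis homega : monoid_hom_End op one omega.
Hypothesis hcomp : S_compatible omega.

Notation A := (@skew_series R S le).
Notation mul := (ss_mul op omega).

Lemma hmon : is_monoid op one. Proof. by case: hS => -[]. Qed.

Lemma A_good f : A f -> good le (supp f).
Proof. by case=> ha hn; exact: (an_good (hpo hS) ha hn). Qed.

Lemma A_of_good f : good le (supp f) -> A f.
Proof. by move=> g; split; [exact: (good_artinian (hpo hS) g) | exact: (good_narrow g)]. Qed.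

Lemma A_sub f g : A f -> supp g `<=` supp f -> A g.
Proof. by case=> ha hn sub; split; [apply: artinian_sub ha sub | apply: narrow_sub hn sub]. Qed.

Lemma Xs_fin f g s : A f -> A g -> finite_set (Xs op f g s).
Proof. by move=> /A_good gf /A_good gg; apply: (Xfin_gen hS s gf gg). Qed.

Lemma mul_supp f g : supp (mul f g) `<=` Pset op (supp f) (supp g).
Proof.
move=> s hs; apply: contrapT => hn; apply: hs; rewrite /ss_mul fsbig1 //.
move=> [u v] [/= e [fu gv]]; exfalso; apply: hn; exists u, v; split => //.
Qed.

Lemma A_mul f g : A f -> A g -> A (mul f g).
Proof.
move=> /A_good gf /A_good gg; apply: A_of_good.
apply: good_sub (mul_supp (f:=f) (g:=g)); exact: (good_prod hS gf gg).
Qed.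

Definition cst (b : R) : S -> R := fun s => if s == one then b else 0.

Lemma A_cst b : A (cst b).
Proof.
apply: A_of_good => a ha; exists 0%N, 1%N; split => //.
have h n : a n = one by move: (ha n); rewrite /supp /cst /=; case: eqP.
by rewrite !h; case: (hpo hS).
Qed.

Lemma mul_cst_r f b v : mul f (cst b) v = f v * omega v b.
Proof.
rewrite /ss_mul (fsbig_widen _ [set (v, one)]) ?fsbig_set1 /= 1?/cst ?eqxx //.
- move=> [u w] [/= e [fu gw]]; move: gw; rewrite /cst.
  case: (eqVneq w one) => [ew _|nw]; last by [].
  by move: e; rewrite ew; case: hmon => _ _ -> ->.
- move=> p [/= -> hn] /=; rewrite eqxx.
  apply: contrapT => hn2; apply: hn; split => /=; first by case: hmon.
  split => hz; apply: hn2; first by rewrite hz mul0r.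
  by rewrite /cst eqxx in hz; rewrite hz rmorph0 mulr0.
Qed.

Lemma mul_cst_l b f s : mul (cst b) f s = b * f s.
Proof.
rewrite /ss_mul (fsbig_widen _ [set (one, s)]) ?fsbig_set1 /= ?eqxx //.
- by rewrite /cst eqxx; case: homega => -> _.
- move=> [u w] [/= e [fu gw]]; move: fu; rewrite /cst.
  case: (eqVneq u one) => [eu _|nu]; last by [].
  by move: e; rewrite eu; case: hmon => _ -> _ ->.
- move=> p [/= -> hn] /=; rewrite /cst eqxx.
  apply: contrapT => hn2; apply: hn; split => /=; first by case: hmon.
  split => hz; apply: hn2; first by move: hz; rewrite /cst eqxx => ->; rewrite mul0r.
  by rewrite hz rmorph0 mulr0.
Qed.

Lemma mul_cstr_fun f b : mul f (cst b) = fun v => f v * omega v b.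
Proof. by apply: funext => v; apply: mul_cst_r. Qed.

Lemma assocC h f b s : A h -> A f ->
  mul h (mul f (cst b)) s = mul h f s * omega s b.
Proof.
move=> Ah Af; rewrite mul_cstr_fun /ss_mul.
rewrite (eq_fsbigr (fun p => h p.1 * omega p.1 (f p.2) * omega s b)); last first.
  move=> [u v]; rewrite inE => -[/= e _]; rewrite rmorphM mulrA; congr (_ * _).
  by rewrite -e; case: homega => _ ->.
rewrite (fsbig_widen _ (Xs op h f s)); last 2 first.
- move=> [u v] [/= e [hu fvb]]; split => //; split => // fv0; apply: fvb.
  by rewrite /= fv0 mul0r.
- move=> [u v] [[/= e [hu fv]] nP] /=.
  have z : f v * omega v b = 0.
    by apply: contrapT => nz; apply: nP; split => //.
  rewrite -e; case: homega => _ ->; rewrite -mulrA -rmorphM z rmorph0 mulr0 //.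
rewrite fsbig_finite; last exact: Xs_fin.
rewrite (@fsbig_finite _ _ _ _ (Xs op h f s) (fun p => h p.1 * omega p.1 (f p.2))); last exact: Xs_fin.
by rewrite mulr_suml.
Qed.
End Series.

Section Setpow.
Variables (T : Type) (mul : T -> T -> T).

Lemma setpow1 (X : set T) y : setpow mul X 1 y <-> X y.
Proof.
split.
- by case=> a [[|x s] [Xa _ /= e ->]] //.
- by move=> Xy; exists y, [::]; split.
Qed.

Lemma setpowS (X : set T) k y : setpow mul X k.+2 y <->
  exists a x, [/\ setpow mul X k.+1 a, X x & y = mul a x].
Proof.
split.
- case=> a [s [Xa Xs es ->]].
  case/lastP: s Xs es => [|s x] Xs es; first by [].
  rewrite size_rcons in es; case: es => es.
  exists (foldl mul a s), x; split.
  + exists a, s; split => //; last by rewrite es.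
    move=> i ilt; have := Xs i; rewrite size_rcons nth_rcons ilt; apply.
    exact: ltnW.
  + by have := Xs (size s); rewrite size_rcons nth_rcons ltnn eqxx; apply.
  + by rewrite foldl_rcons.
- case=> a [x [[a0 [s [Xa0 Xs es ->]]] Xx ->]].
  exists a0, (rcons s x); split => //.
  + move=> i; rewrite size_rcons nth_rcons ltnS leq_eqVlt => /orP[/eqP ->|ilt].
      by rewrite ltnn eqxx.
    by rewrite ilt; apply: Xs.
  + by rewrite size_rcons es.
  + by rewrite foldl_rcons.
Qed.

Lemma setpow_sub (X Y : set T) n : X `<=` Y -> setpow mul X n `<=` setpow mul Y n.
Proof.
move=> XY y [a [s [Xa Xs es ->]]]; exists a, s; split => //; first exact: XY.
by move=> i /Xs; apply: XY.
Qed.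
End Setpow.

Definition Ann (R : pzRingType) (C : set R) (k : nat) (y : R) :=
  forall a, setpow (@GRing.mul R) C k a -> (a * y = 0)%R.

Lemma Ann1 (R : pzRingType) (C : set R) y : Ann C 1 y <-> forall c, C c -> (c * y = 0)%R.
Proof.
split; first by move=> h c Cc; apply: h; apply/setpow1.
by move=> h a /setpow1; apply: h.
Qed.

Lemma AnnS (R : pzRingType) (C : set R) k y :
  Ann C k.+2 y <-> forall c, C c -> Ann C k.+1 (c * y).
Proof.
split.
- move=> h c Cc a ha; rewrite GRing.mulrA; apply: h; apply/setpowS.
  by exists a, c; split.
- move=> h a /setpowS [a' [x [ha' Cx ->]]]; rewrite -GRing.mulrA; exact: h.
Qed.

Lemma Ann_sub (R : pzRingType) (C D : set R) k y : C `<=` D -> Ann D k y -> Ann C k y.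
Proof. by move=> CD h a ha; apply: h; apply: setpow_sub ha. Qed.

Definition coef (R : pzRingType) (S : Type) (X : set (S -> R)) : set R :=
  [set c | exists f s, X f /\ c = f s].

Section Main.
Local Open Scope ring_scope.
Variables (R : pzRingType) (S : choiceType) (op : S -> S -> S) (one : S)
          (le : S -> S -> Prop) (omega : S -> {rmorphism R -> R}).
Hypothesis hS : strictly_ordered_monoid op one le.
Hypothesis homega : monoid_hom_End op one omega.
Hypothesis hcomp : S_compatible omega.
Hypothesis harm : S_omega_Armendariz op le omega.

Notation A := (@skew_series R S le).
Notation mul := (ss_mul op omega).

Lemma setpow_A (X : set (S -> R)) k : X `<=` A -> setpow mul X k.+1 `<=` A.
Proof.
move=> XA; elim: k => [|k IH] h.
  by move/setpow1; apply: XA.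
case/setpowS => [h' [f [h1 Xf ->]]]; apply: (A_mul omega hS); [exact: IH | exact: XA].
Qed.

Lemma Qaux (X : set (S -> R)) (XA : X `<=` A) k :
  forall h, setpow mul X k.+1 h -> forall u y, Ann (coef X) k.+1 y -> h u * y = 0.
Proof.
elim: k => [|k IH] h.
  by move/setpow1 => Xh u y /Ann1; apply; exists h, u.
case/setpowS => [h' [f [h1 Xf ->]]] u y /AnnS hy.
rewrite /ss_mul fsbig_finite; last by apply: (Xs_fin hS); [apply: (setpow_A XA h1) | apply: XA].
rewrite GRing.mulr_suml big1 // => p _.
apply: (hcomp p.1 _ _).2; rewrite -GRing.mulrA -rmorphM.
apply: (hcomp p.1 _ _).1; apply: (IH _ h1); apply: hy.
by exists f, p.2.
Qed.

Lemma Qmain (X : set (S -> R)) (XA : X `<=` A) k g :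
  (forall t, Ann (coef X) k.+1 (g t)) ->
  forall h, setpow mul X k.+1 h -> mul h g = (@ss_zero R S).
Proof.
move=> hg h hh; apply: funext => s; rewrite /ss_mul /ss_zero fsbig1 // => p _.
apply: (hcomp p.1 _ _).1; exact: (Qaux XA hh).
Qed.

Lemma Pmain (X : set (S -> R)) (XA : X `<=` A) k :
  forall g, A g -> (forall h, setpow mul X k.+1 h -> mul h g = (@ss_zero R S)) ->
  forall t, Ann (coef X) k.+1 (g t).
Proof.
elim: k => [|k IH] g Ag H t.
  apply/Ann1 => _ [f [v [Xf ->]]].
  apply: (hcomp v _ _).2; apply: (harm (XA _ Xf) Ag) => //.
  by apply: H; apply/setpow1.
apply/AnnS => _ [f [v [Xf ->]]].
pose b := g t.
have Ag' : A (mul f (cst one b)) by apply: (A_mul omega hS); [exact: XA | exact: (A_cst hS)].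
have H' : forall h', setpow mul X k.+1 h' -> mul h' (mul f (cst one b)) = (@ss_zero R S).
  move=> h' hh'; apply: funext => s.
  rewrite (assocC hS homega) //; [|exact: (setpow_A XA hh') | exact: XA].
  apply: (harm _ Ag); first by apply: (A_mul omega hS); [exact: (setpow_A XA hh') | exact: XA].
  by apply: H; apply/setpowS; exists h', f; split.
have := IH _ Ag' H' v; rewrite (mul_cst_r omega hS) => hA a ha.
rewrite GRing.mulrA; apply: (hcomp v _ _).2; rewrite -GRing.mulrA; exact: hA.
Qed.

Lemma final (X : set (S -> R)) (XA : X `<=` A) (D : set R) k (e : R) :
  e * e = e ->
  (forall y, Ann (coef X) k.+1 y <-> Ann D k.+1 y) ->
  rann [set: R] 0 (@GRing.mul R) (setpow (@GRing.mul R) D k.+1) =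
    lprinc [set: R] (@GRing.mul R) e ->
  [/\ A (cst one e), mul (cst one e) (cst one e) = cst one e &
    rann A (@ss_zero R S) mul (setpow mul X k.+1) = lprinc A mul (cst one e)].
Proof.
move=> he hAD hR; split.
- exact: (A_cst hS).
- apply: funext => s; rewrite (mul_cst_l hS homega) /cst; case: eqP => _ //.
  by rewrite GRing.mulr0.
- apply/seteqP; split => g.
  + case=> Ag Hg; have hA := Pmain XA Ag Hg.
    exists g => //; apply: funext => t; rewrite (mul_cst_l hS homega).
    have : rann [set: R] 0 (@GRing.mul R) (setpow (@GRing.mul R) D k.+1) (g t).
      by split => //; apply/hAD/hA.
    by rewrite hR => -[r _ <-]; rewrite GRing.mulrA he.
  + case=> a Aa <-; split.
    * apply: (A_sub (g := mul (cst one e) a) Aa) => t; rewrite /supp /= (mul_cst_l hS homega) => nz at0.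
      by apply: nz; rewrite at0 GRing.mulr0.
    * move=> h hh; apply: (Qmain XA _ hh) => t; apply/hAD.
      rewrite (mul_cst_l hS homega).
      have : lprinc [set: R] (@GRing.mul R) e (e * a t) by exists (a t).
      by rewrite -hR => -[_ H].
Qed.
End Main.

Section Rid.
Local Open Scope ring_scope.
Variable (R : pzRingType).

Definition rid (C : set R) : set R :=
  [set x | exists l : seq (R * R), (forall p, p \in l -> C p.1) /\
      x = \sum_(p <- l) p.1 * p.2].

Lemma rid_ideal (C : set R) :
  right_ideal [set: R] 0 (@GRing.add R) (@GRing.opp R) (@GRing.mul R) (rid C).
Proof.
split => //.
- by exists [::]; rewrite big_nil.
- move=> x y [l1 [h1 ->]] [l2 [h2 ->]]; exists (l1 ++ l2); split; last by rewrite big_cat.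
  by move=> p; rewrite mem_cat => /orP[/h1|/h2].
- move=> x [l [h ->]]; exists (map (fun p => (p.1, - p.2)) l); split.
    by move=> _ /mapP [q ql ->]; exact: h ql.
  by rewrite big_map -sumrN; apply: eq_bigr => p _; rewrite mulrN.
- move=> x r [l [h ->]] _; exists (map (fun p => (p.1, p.2 * r)) l); split.
    by move=> _ /mapP [q ql ->]; exact: h ql.
  by rewrite big_map mulr_suml; apply: eq_bigr => p _; rewrite mulrA.
Qed.

Lemma sub_rid (C : set R) : C `<=` rid C.
Proof. by move=> c Cc; exists [:: (c, 1)]; split; [move=> p; rewrite inE => /eqP -> | rewrite big_seq1 mulr1]. Qed.

Lemma Ann_sum (D : set R) n (l : seq (R * R)) (F : R * R -> R) :
  (forall p, p \in l -> Ann D n (F p)) -> Ann D n (\sum_(p <- l) F p).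
Proof.
move=> h a ha; rewrite mulr_sumr big1_seq // => p /andP[_ pl]; exact: h.
Qed.

Lemma rid_Ann (C : set R) :
  (forall c, C c -> forall r, exists2 c', C c' &
     forall a y, a * c' * y = 0 -> a * c * r * y = 0) ->
  forall k y, Ann C k.+1 y -> Ann (rid C) k.+1 y.
Proof.
move=> TR; elim => [|k IH] y.
  move/Ann1 => hy; apply/Ann1 => _ [l [hl ->]]; rewrite mulr_suml big1_seq // => p /andP[_ pl].
  have [c' Cc' hc'] := TR _ (hl _ pl) p.2.
  by have := hc' 1 y; rewrite !mul1r; apply; apply: hy.
move/AnnS => hy; apply/AnnS => _ [l [hl ->]]; rewrite mulr_suml; apply: Ann_sum => p pl.
apply: IH => a ha.
have [c' Cc' hc'] := TR _ (hl _ pl) p.2.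
rewrite !mulrA; apply: hc'; rewrite -mulrA; exact: hy.
Qed.
End Rid.

Section Trick.
Local Open Scope ring_scope.
Variables (R : pzRingType) (S : choiceType) (op : S -> S -> S) (one : S)
          (le : S -> S -> Prop) (omega : S -> {rmorphism R -> R}).
Hypothesis hS : strictly_ordered_monoid op one le.
Hypothesis hcomp : S_compatible omega.

Lemma trick (I : set (S -> R)) :
  right_ideal (@skew_series R S le) (@ss_zero R S) (ss_add (S:=S)) (ss_opp (S:=S))
     (ss_mul op omega) I ->
  forall c, coef I c -> forall r, exists2 c', coef I c' &
     forall a y, a * c' * y = 0 -> a * c * r * y = 0.
Proof.
case=> IA _ _ _ Imul _ [f [s [If ->]]] r.
exists (ss_mul op omega f (cst one r) s).
  by exists (ss_mul op omega f (cst one r)), s; split => //; apply: Imul => //; apply: (A_cst hS).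
rewrite (mul_cst_r omega hS) => a y h.
rewrite -(mulrA (a * f s)); apply: (hcomp s _ _).2; rewrite rmorphM mulrA.
by apply: (hcomp s _ _).1; move: h; rewrite mulrA.
Qed.
End Trick.

Theorem proposition3p6 (R : pzRingType) (S : choiceType) (op : S -> S -> S)
    (one : S) (le : S -> S -> Prop) (omega : S -> {rmorphism R -> R})
    (hS : strictly_ordered_monoid op one le)
    (hqt : quasitotally_ordered op one le)
    (homega : monoid_hom_End op one omega)
    (hcomp : S_compatible omega)
    (harm : S_omega_Armendariz op le omega) :
  (ring_gen_right_Baer R -> series_gen_right_Baer op le omega) /\
  (ring_gen_right_quasi_Baer R -> series_gen_right_quasi_Baer op le omega).
Proof.
split.
- move=> hRB X XA [f Xf].
  have [n [e [n0 _ he hR]]] : exists n e, [/\ (0 < n)%N, [set: R] e,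
      Defs.idempotent (@GRing.mul R) e &
      rann [set: R] 0%R (@GRing.mul R) (setpow (@GRing.mul R) (coef X) n) =
      lprinc [set: R] (@GRing.mul R) e].
    by apply: hRB => //; exists (f one), f, one.
  case: n n0 hR => [|k] // _ hR.
  have [h1 h2 h3] := final hS homega hcomp harm XA he (fun y => iff_refl _) hR.
  by exists k.+1, (cst one e); split.
- move=> hRQ I hI.
  have IA : I `<=` skew_series le by case: hI.
  have [n [e [n0 _ he hR]]] : exists n e, [/\ (0 < n)%N, [set: R] e,
      Defs.idempotent (@GRing.mul R) e &
      rann [set: R] 0%R (@GRing.mul R) (setpow (@GRing.mul R) (rid (coef I)) n) =
      lprinc [set: R] (@GRing.mul R) e].
    by apply: hRQ; apply: rid_ideal.
  case: n n0 hR => [|k] // _ hR.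
  have hAD : forall y, Ann (coef I) k.+1 y <-> Ann (rid (coef I)) k.+1 y.
    move=> y; split; last by apply: Ann_sub; apply: sub_rid.
    by apply: rid_Ann; apply: (trick hS hcomp hI).
  have [h1 h2 h3] := final hS homega hcomp harm IA he hAD hR.
  by exists k.+1, (cst one e); split.
Qed.
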